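(* Let $Q$ be a quiver and let $\Pi\in\mathcal{V}^2Q$ be a Poisson structure on $\mathbb{C}Q$ such that $\Pi=\Pi^1+\Pi^2$, where $\Pi^1$ and $\Pi^2$ are homogeneous of different degrees. Then $\Pi^1$ and $\Pi^2$ are compatible Poisson structures on $\mathbb{C}Q$, i.e. $[\Pi^i,\Pi^j]_{\mathcal V}=0$ for $i,j=1,2$.
   Context: A quiver $Q$ has vertex set $I=\{1,\dots,k\}$, arrows $Q$, head/tail maps $h,t$. The path algebra $\mathbb{C}Q$ has basis the paths (including trivial paths $e_i$), multiplied by concatenation written right to left. The double quiver $\bar Q$ has arrows $Q\cup\{a^*\}$ with $h(a^* )=t(a)$, $t(a^* )=h(a)$; $\mathbb{C}\bar Q^r$ is spanned by paths with exactly $r$ starred arrows. $\mathcal{V}Q$ is the quotient of $\mathbb{C}\bar Q$ by the span of $PR-(-1)^{pr}RP$ ($P\in\mathbb{C}\bar Q^p$, $R\in\mathbb{C}\bar Q^r$), graded by $r$. For $w\in\bar Q$, $D_w(x_1\cdots x_n)=\sum_{i:x_i=w}(-1)^{\lambda_i\mu_i}x_{i+1}\cdots x_nx_1\cdots x_{i-1}$, $\lambda_i$ (resp. $\mu_i$) the number of starred arrows among $x_{i+1},\dots,x_n$ (resp. $x_1,\dots,x_i$). For $\gamma\in\mathcal{V}^rQ,\delta\in\mathcal{V}^sQ$: $[\gamma,\delta]_{\mathcal V}=\sum_{a\in Q}\big(D_{a^*}(\gamma)D_a(\delta)-(-1)^{(r-1)(s-1)}D_{a^*}(\delta)D_a(\gamma)\big)$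 modulo the relations. A Poisson structure on $\mathbb{C}Q$ is $\Pi\in\mathcal{V}^2Q$ with $[\Pi,\Pi]_{\mathcal V}=0$. Every element of $\mathcal{V}^2Q$ can be written as $\sum_{a,b\in Q}\sum_{P,R}[Pa^*,Rb^*]$ with $P,R\in\mathbb{C}Q$ paths, where $[u,v]=uv-vu$; such an element is homogeneous of degree $p$ if each nonzero closed path $Pa^*Rb^*$ occurring has length $p+2$. *)

(* Defs.v *)
From HB Require Import structures.
From mathcomp Require Import all_boot all_order all_algebra.
Set Implicit Arguments. Unset Strict Implicit. Unset Printing Implicit Defensive.
Import GRing.Theory Num.Theory.
Local Open Scope ring_scope.

Record quiver := Quiver {
  nverts : nat;
  arrow : finType;
  hA : arrow -> 'I_nverts;
  tA : arrow -> 'I_nverts }.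

Section DoubleQuiver.
Variable Q : quiver.

(* Arrows of the double quiver: inl a = a, inr a = a^* *)
Definition letter := (arrow Q + arrow Q)%type.
Definition hL (x : letter) := match x with inl a => hA a | inr a => tA a end.
Definition tL (x : letter) := match x with inl a => tA a | inr a => hA a end.
Definition starred (x : letter) : bool := if x is inr _ then true else false.

(* Raw path: a vertex and a word x_1 ... x_n (written right to left:
   x_n is traversed first).  The trivial path e_i is (i, [::]);
   a nonempty word is a path iff t(x_i) = h(x_{i+1}), and its vertex
   component is normalised to h(x_1). *)
Definition rawpath := ('I_(nverts Q) * seq letter)%type.
Definition valid (w : rawpath) : bool :=
  match w.2 with
  | [::] => true
  | x :: s => (w.1 == hL x) && path (fun y z => tL y == hL z) x s
  end.
Definition hdP (w : rawpath) := if w.2 is x :: _ then hL x else w.1.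
Definition tlP (w : rawpath) := if w.2 is x :: s then tL (last x s) else w.1.
Definition closedP (w : rawpath) : bool := tlP w == hdP w.
Definition nstar (w : rawpath) : nat := count starred w.2.
Definition mkpath (v : 'I_(nverts Q)) (s : seq letter) : rawpath :=
  (if s is x :: _ then hL x else v, s).
Definition lpath (x : letter) : rawpath := (hL x, [:: x]).
(* partial concatenation P R (R first, then P): None means the product is 0 *)
Definition pcat (P R : rawpath) : option rawpath :=
  if [&& valid P, valid R & tlP P == hdP R] then Some (hdP P, P.2 ++ R.2)
  else None.

Variable C : numClosedFieldType.

(* Elements of C\bar Q: coefficient functions on paths (zero off valid paths). *)
Definition elt := rawpath -> C.
Definition pt (P : rawpath) : elt := fun w => (w == P)%:R.

Definition mulE (f g : elt) : elt := fun w =>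
  if valid w then
    \sum_(j < (size w.2).+1)
       f (mkpath (hdP w) (take j w.2)) * g (mkpath (tlP w) (drop j w.2))
  else 0.

Definition commE (f g : elt) : elt := fun w => mulE f g w - mulE g f w.

Definition inCQbar (r : nat) (f : elt) : Prop :=
  forall w, f w != 0 -> valid w && (nstar w == r).

Definition relgen (P R : rawpath) : elt := fun w =>
  mulE (pt P) (pt R) w - (-1) ^+ (nstar P * nstar R) * mulE (pt R) (pt P) w.

(* x is zero in V Q, i.e. x lies in the span of the relations *)
Definition inV0 (x : elt) : Prop :=
  exists s : seq (C * rawpath * rawpath),
    forall w, x w = \sum_(t <- s) t.1.1 * relgen t.1.2 t.2 w.

Definition eqV (x y : elt) : Prop := inV0 (fun w => x w - y w).

(* D_z(x_1...x_n) = sum_{i : x_i = z} (-1)^{lambda_i mu_i} x_{i+1}..x_n x_1..x_{i-1},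
   computed on the closed paths of the representative (non-closed paths are 0
   in V Q).  D_z(g)(u) collects the closed paths x having u as such a rotation;
   the position index j = i - 1 ranges over 0..size u. *)
Definition Dw (z : letter) (g : elt) : elt := fun u =>
  if valid u then
    \sum_(j < (size u.2).+1)
      let m := size u.2 in
      let x := mkpath (hdP u) (drop (m - j) u.2 ++ z :: take (m - j) u.2) in
      let lam := count starred (take (m - j) u.2) in
      let mu := count starred (drop (m - j) u.2) + starred z in
      if [&& valid x, closedP x & (u.2 != [::]) || (u.1 == tL z)]
      then (-1) ^+ (lam * mu) * g x else 0
  else 0.

(* [g, d]_V for g in V^r, d in V^s; note (-1)^{(r-1)(s-1)} = (-1)^{(r+1)(s+1)} *)
Definition brV (r s : nat) (g d : elt) : elt := fun u =>
  \sum_(a : arrow Q)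
     (mulE (Dw (inr a) g) (Dw (inl a) d) u
      - (-1) ^+ (r.+1 * s.+1) * mulE (Dw (inr a) d) (Dw (inl a) g) u).

Definition starP (a : arrow Q) : rawpath := lpath (inr a).

Definition term_path (P : rawpath) (a : arrow Q) (R : rawpath) (b : arrow Q)
  : option rawpath :=
  obind (fun x => obind (fun y => pcat y (starP b)) (pcat x R)) (pcat P (starP a)).

Definition homogeneous (p : nat) (g : elt) : Prop :=
  exists s : seq (C * rawpath * arrow Q * rawpath * arrow Q),
    (forall c P a R b, (c, P, a, R, b) \in s ->
       [/\ valid P, nstar P = 0%N, valid R, nstar R = 0%N &
           c != 0 -> forall w, term_path P a R b = Some w -> closedP w ->
             size w.2 = p.+2]) /\
    eqV g (fun w => \sum_(t <- s)
       t.1.1.1.1 * commE (mulE (pt t.1.1.1.2) (pt (starP t.1.1.2)))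
                         (mulE (pt t.1.2) (pt (starP t.2))) w).

End DoubleQuiver.

(* Main.v *)
Require Import Defs.
From HB Require Import structures.
From mathcomp Require Import all_boot all_order all_algebra zify ring.
Set Implicit Arguments. Unset Strict Implicit. Unset Printing Implicit Defensive.
Import GRing.Theory Num.Theory.
Local Open Scope ring_scope.

Lemma nf_hd (Q : quiver) (P : rawpath Q) : valid P -> mkpath (hdP P) P.2 = P.
Proof. by case: P => v [|x s]; rewrite /valid /= => // /andP[/eqP -> _]. Qed.

Lemma nf_tl (Q : quiver) (P : rawpath Q) : valid P -> mkpath (tlP P) P.2 = P.
Proof. by case: P => v [|x s]; rewrite /valid /= => // /andP[/eqP -> _]. Qed.

Lemma nf_ne (Q : quiver) (P : rawpath Q) v : valid P -> P.2 != [::] -> mkpath v P.2 = P.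
Proof. by case: P => u [|x s]; rewrite /valid /= => // /andP[/eqP -> _]. Qed.

Lemma join (Q : quiver) (P R : rawpath Q) : valid P -> valid R -> tlP P = hdP R ->
  [/\ valid (hdP P, P.2 ++ R.2), hdP (hdP P, P.2++R.2) = hdP P &
      tlP (hdP P, P.2++R.2) = tlP R].
Proof.
case: P => v [|x s]; case: R => u [|y t]; rewrite /valid /hdP /tlP /=.
- by move=> _ _ ->.
- by move=> _ /andP[_ ->] ->; rewrite eqxx.
- by rewrite cats0 => /andP[_ ->] _ ->; rewrite eqxx.
move=> /andP[_ p1] /andP[_ p2] e; rewrite cat_path p1 /= p2 e !eqxx.
by rewrite last_cat.
Qed.

Lemma pcat_some (Q : quiver) (P R w : rawpath Q) : pcat P R = Some w ->
  [/\ valid P, valid R, tlP P = hdP R & w = (hdP P, P.2 ++ R.2)] /\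
  [/\ valid w, hdP w = hdP P & tlP w = tlP R].
Proof.
rewrite /pcat; case: ifP => // /and3P[vP vR /eqP e] [<-].
by have [? ? ?] := join vP vR e.
Qed.

Lemma pcat_split (Q : quiver) (w : rawpath Q) X Y : valid w -> w.2 = X ++ Y ->
  pcat (mkpath (hdP w) X) (mkpath (tlP w) Y) = Some w.
Proof.
case: w => v W /= vw eW; subst W.
case: X vw => [|x s]; case: Y => [|y t]; rewrite /pcat /valid /hdP /tlP /mkpath /=.
- by rewrite eqxx.
- by move=> /andP[/eqP -> p]; rewrite eqxx p.
- by rewrite cats0 => /andP[/eqP -> p]; rewrite !eqxx p.
move=> /andP[/eqP -> p]; move: p; rewrite cat_path /= => /and3P[p1 e p2].
by rewrite !eqxx p1 p2 e.
Qed.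

Lemma pcat_rot (Q : quiver) (P R w : rawpath Q) : pcat P R = Some w -> closedP w ->
  pcat R P = Some (hdP R, R.2 ++ P.2) /\ closedP (hdP R, R.2 ++ P.2).
Proof.
move=> /pcat_some[[vP vR e ->] [vw hw tw]]; rewrite /closedP hw tw => /eqP e'.
have [j1 j2 j3] := join vR vP e'.
split; first by rewrite /pcat vR vP e' eqxx.
by rewrite j2 j3 e.
Qed.

Definition optpt (Q : quiver) (C : numClosedFieldType) (o : option (rawpath Q)) : elt Q C :=
  fun w => if o is Some y then pt C y w else 0.

Lemma mulE_pt (Q : quiver) (C : numClosedFieldType) (P R : rawpath Q) w :
  mulE (pt C P) (pt C R) w = optpt C (pcat P R) w.
Proof.
rewrite /mulE /optpt /pt.
have key : forall j : 'I_(size w.2).+1,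
  ((mkpath (hdP w) (take j w.2) == P) && (mkpath (tlP w) (drop j w.2) == R)) ->
  valid w -> pcat P R = Some w /\ (j : nat) = size P.2.
  move=> j /andP[/eqP eP /eqP eR] vw; split.
    by rewrite -eP -eR pcat_split // cat_take_drop.
  by rewrite -eP /= size_takel // -ltnS.
case: ifP => vw.
  case E: (pcat P R) => [y|].
    case: (eqVneq w y) => [ewy|nwy].
      subst y; have [[vP vR e ew] [_ hw tw]] := pcat_some E.
      have lP : (size P.2 < (size w.2).+1)%N by rewrite ew /= size_cat ltnS leq_addr.
      rewrite (bigD1 (Ordinal lP)) //= big1 ?addr0.
        rewrite ew /= take_size_cat // drop_size_cat // -ew hw tw nf_hd // nf_tl //.
        by rewrite !eqxx mulr1.
      move=> j nj; rewrite -natrM mulnb; case h: (_ && _) => //.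
      have [_ ej] := key j h vw.
      by move: nj; rewrite (_ : j = Ordinal lP) ?eqxx //; exact: val_inj.
    rewrite big1 // => j _; rewrite -natrM mulnb; case h: (_ && _) => //.
    by have [] := key j h vw; rewrite E => -[] /eqP; rewrite eq_sym (negPf nwy).
  rewrite big1 // => j _; rewrite -natrM mulnb; case h: (_ && _) => //.
  by have [] := key j h vw; rewrite E.
case E: (pcat P R) => [y|] //.
have [_ [vy _ _]] := pcat_some E.
case: (eqVneq w y) => [ewy|//]; by rewrite ewy vy in vw.
Qed.

Lemma mulE_ext (Q : quiver) (C : numClosedFieldType) (f f' g g' : elt Q C) w :
  (forall v, f v = f' v) -> (forall v, g v = g' v) -> mulE f g w = mulE f' g' w.
Proof. by move=> ef eg; rewrite /mulE; case: ifP => // _; apply: eq_bigr => j _; rewrite ef eg. Qed.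

Lemma mulE0l (Q : quiver) (C : numClosedFieldType) (g : elt Q C) w :
  mulE (fun _ => 0) g w = 0.
Proof. by rewrite /mulE; case: ifP => // _; rewrite big1 // => j _; rewrite mul0r. Qed.

Lemma mulE0r (Q : quiver) (C : numClosedFieldType) (g : elt Q C) w :
  mulE g (fun _ => 0) w = 0.
Proof. by rewrite /mulE; case: ifP => // _; rewrite big1 // => j _; rewrite mulr0. Qed.

Lemma mulEDl (Q : quiver) (C : numClosedFieldType) (f1 f2 g : elt Q C) w :
  mulE (fun v => f1 v + f2 v) g w = mulE f1 g w + mulE f2 g w.
Proof.
rewrite /mulE; case: ifP => _; last by rewrite addr0.
by rewrite -big_split; apply: eq_bigr => j _; rewrite mulrDl.
Qed.

Lemma mulEDr (Q : quiver) (C : numClosedFieldType) (f g1 g2 : elt Q C) w :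
  mulE f (fun v => g1 v + g2 v) w = mulE f g1 w + mulE f g2 w.
Proof.
rewrite /mulE; case: ifP => _; last by rewrite addr0.
by rewrite -big_split; apply: eq_bigr => j _; rewrite mulrDr.
Qed.

Lemma mulE_opt (Q : quiver) (C : numClosedFieldType) (o1 o2 : option (rawpath Q)) w :
  mulE (optpt C o1) (optpt C o2) w =
  optpt C (if o1 is Some y1 then if o2 is Some y2 then pcat y1 y2 else None else None) w.
Proof.
case: o1 => [y1|].
  case: o2 => [y2|]; last first.
    by rewrite (@mulE_ext _ _ _ (optpt C (Some y1)) _ (fun _ => 0)) ?mulE0r.
  by rewrite -mulE_pt.
by rewrite (@mulE_ext _ _ _ (fun _ => 0) _ (optpt C o2)) ?mulE0l.
Qed.

Lemma Dw_sum (Q : quiver) (C : numClosedFieldType) (T : Type) (s : seq T)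
   (F : T -> elt Q C) (g : elt Q C) z u :
  (forall w, g w = \sum_(t <- s) F t w) -> Dw z g u = \sum_(t <- s) Dw z (F t) u.
Proof.
move=> eg; rewrite /Dw; case: ifP => _; last by rewrite big1.
rewrite exchange_big /=; apply: eq_bigr => j _ /=.
case: ifP => _; last by rewrite big1.
by rewrite eg big_distrr.
Qed.

Lemma Dw_scale (Q : quiver) (C : numClosedFieldType) (a : C) (f : elt Q C) z u :
  Dw z (fun w => a * f w) u = a * Dw z f u.
Proof.
rewrite /Dw; case: ifP => _; last by rewrite mulr0.
rewrite big_distrr; apply: eq_bigr => j _ /=.
case: ifP => _; last by rewrite mulr0.
by rewrite mulrCA.
Qed.

Lemma Dw_add (Q : quiver) (C : numClosedFieldType) (f g : elt Q C) z u :
  Dw z (fun w => f w + g w) u = Dw z f u + Dw z g u.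
Proof.
rewrite /Dw; case: ifP => _; last by rewrite addr0.
rewrite -big_split; apply: eq_bigr => j _ /=.
case: ifP => _; last by rewrite addr0.
by rewrite mulrDr.
Qed.

Lemma Dw_ext (Q : quiver) (C : numClosedFieldType) (f g : elt Q C) z u :
  (forall w, f w = g w) -> Dw z f u = Dw z g u.
Proof.
move=> e; rewrite /Dw; case: ifP => // _; apply: eq_bigr => j _ /=.
by rewrite e.
Qed.

Definition er (Q : quiver) : rel (letter Q) := fun y z => tL y == hL z.

Lemma vc (Q : quiver) v (W : seq (letter Q)) :
  valid (mkpath v W) && closedP (mkpath v W) = cycle (@er Q) W.
Proof.
case: W => [|x s]; first by rewrite /closedP /= eqxx.
rewrite /valid /closedP /mkpath /hdP /tlP /= eqxx /= rcons_path.
by [].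
Qed.


Local Close Scope ring_scope.
Definition sig (n l k : nat) : nat := if (l + k < n)%N then (l + k)%N else (l + k - n)%N.

Lemma sign_rot (T : Type) (a : pred T) (S : seq T) k l : (k < size S)%N -> (l <= size S)%N ->
  odd (count a (take k S) * count a (drop k S)) =
  odd (count a (take l (rot k S)) * count a (drop l (rot k S))) (+)
  odd (count a (take (sig (size S) l k) S) * count a (drop (sig (size S) l k) S)).
Proof.
move=> hk hl; rewrite /sig; case: ltnP => h.
  have [X [M [E [eS eX eM]]]] : exists X M E, [/\ S = X ++ M ++ E, size X = k & size M = l].
    exists (take k S), (take l (drop k S)), (drop l (drop k S)).
    rewrite !cat_take_drop size_takel ?size_takel //; last by lia.
    by rewrite size_drop; lia.
  subst S k l.
  rewrite /rot take_size_cat // drop_size_cat // -catA take_size_cat //.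
  rewrite drop_size_cat // addnC catA take_size_cat ?size_cat //.
  rewrite drop_size_cat ?size_cat //.
  rewrite !count_cat !oddM !oddD.
  by case: (odd (count a X)); case: (odd (count a M)); case: (odd (count a E)).
have [X1 [X2 [D [eS e1 e2 eD]]]] : exists X1 X2 D,
  [/\ S = X1 ++ X2 ++ D, size X1 = l + k - size S, size X1 + size X2 = k
    & size D + size X1 = l].
  exists (take (l + k - size S) S), (take (k - (l + k - size S)) (drop (l + k - size S) S)),
     (drop (k - (l + k - size S)) (drop (l + k - size S) S)).
  rewrite !cat_take_drop size_takel; last by lia.
  rewrite size_takel; last by rewrite size_drop; lia.
  rewrite size_drop size_drop; split => //; lia.
rewrite -e1.
have -> : k = size (X1 ++ X2) by rewrite size_cat.
have -> : l = size (D ++ X1) by rewrite size_cat.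
rewrite eS (catA X1 X2 D) rot_size_cat take_size_cat // drop_size_cat //.
rewrite (catA D X1 X2) take_size_cat // drop_size_cat //.
rewrite -(catA X1 X2 D) take_size_cat // drop_size_cat //.
rewrite !count_cat !oddM !oddD.
by case: (odd (count a X1)); case: (odd (count a X2)); case: (odd (count a D)).
Qed.

Local Open Scope ring_scope.
Lemma DwE (Q : quiver) (C : numClosedFieldType) (z : letter Q) (g : elt Q C) u :
  Dw z g u = if valid u then
    (if cycle (@er Q) (rcons u.2 z) && ((u.2 != [::]) || (u.1 == tL z)) then
       \sum_(k < (size u.2).+1)
         (-1) ^+ (count (@starred Q) (take k (rcons u.2 z)) * count (@starred Q) (drop k (rcons u.2 z)))
         * g (mkpath (hdP u) (rot k (rcons u.2 z)))
     else 0)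
  else 0.
Proof.
rewrite /Dw; case: ifP => // _.
rewrite (reindex_inj rev_ord_inj) /=.
set S := rcons u.2 z.
set c := _ && _.
transitivity (\sum_(k < (size u.2).+1) if c then
         (-1) ^+ (count (@starred Q) (take k S) * count (@starred Q) (drop k S))
         * g (mkpath (hdP u) (rot k S)) else 0); last first.
  by case: ifP => // _; rewrite big1.
apply: eq_bigr => k _.
have lk : (k <= size u.2)%N by rewrite -ltnS.
rewrite subSS subKn //.
have eR : drop k u.2 ++ z :: take k u.2 = rot k S.
  by rewrite /rot /S drop_rcons // -!cats1 takel_cat // -catA.
have eC : (count (@starred Q) (drop k u.2) + starred z)%R = count (@starred Q) (drop k S).
  by rewrite /S drop_rcons // -cats1 count_cat /= addn0.
have eT : take k u.2 = take k S by rewrite /S -cats1 takel_cat.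
by rewrite eR andbA vc rot_cycle eC eT.
Qed.


Lemma optptE (Q : quiver) (C : numClosedFieldType) (o : option (rawpath Q)) w :
  optpt C o w = (o == Some w)%:R.
Proof. by case: o => [y|] //=; rewrite /pt eq_sym. Qed.

Lemma sig_lt n l k : (k < n)%N -> (l <= n)%N -> (sig n l k < n)%N.
Proof. by rewrite /sig; case: (ltnP (l + k) n) => //; lia. Qed.

Lemma rot_sig (T : Type) (S : seq T) k l : (k < size S)%N -> (l <= size S)%N ->
  rot (sig (size S) l k) S = rot l (rot k S).
Proof.
move=> hk hl; rewrite rot_add_mod //; last exact: ltnW.
rewrite /sig; case: (ltnP (l + k) (size S)) => h1; case: (leqP (l + k) (size S)) => h2 //; try lia.
have -> : (l + k = size S)%N by lia.
by rewrite subnn rot_size rot0.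
Qed.

Lemma rotsum (Q : quiver) (C : numClosedFieldType) (P R : rawpath Q)
   (S : seq (letter Q)) n v :
  size S = n.+1 -> cycle (@er Q) S ->
  \sum_(k < n.+1) (-1) ^+ (count (@starred Q) (take k S) * count (@starred Q) (drop k S))
       * (pcat P R == Some (mkpath v (rot k S)))%:R
  = (-1) ^+ (nstar P * nstar R) *
    \sum_(k < n.+1) (-1) ^+ (count (@starred Q) (take k S) * count (@starred Q) (drop k S))
       * (pcat R P == Some (mkpath v (rot k S)))%:R :> C.
Proof.
move=> hS cS.
have szk : forall k, size (mkpath v (rot k S)).2 = n.+1 by move=> k; rewrite /= size_rot.
have clk : forall k, closedP (mkpath v (rot k S)).
  by move=> k; have := vc v (rot k S); rewrite rot_cycle cS => /andP[].
case: (boolP (size P.2 + size R.2 == n.+1)%N) => hs; last first.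
  rewrite !big1 ?mulr0 // => k _; case: eqP; rewrite ?mulr0 // => /pcat_some[[_ _ _ e] _].
    by move: (szk k) hs; rewrite e /= size_cat; lia.
  by move: (szk k) hs; rewrite e /= size_cat; lia.
set l := size P.2.
have hl : (l <= size S)%N by rewrite hS -(eqP hs) leq_addr.
have hk : forall k : 'I_n.+1, (k < size S)%N by move=> k; rewrite hS.
have sl : forall k : 'I_n.+1, (sig (size S) l k < n.+1)%N.
  by move=> k; rewrite -{2}hS; exact: sig_lt.
pose sg (k : 'I_n.+1) := Ordinal (sl k).
have sg_inj : injective sg.
  move=> k1 k2 /(congr1 val) /=; rewrite /sig hS => h; apply: val_inj => /=.
  move: h (ltn_ord k1) (ltn_ord k2); case: (ltnP (l + k1) n.+1); case: (ltnP (l + k2) n.+1); lia.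
rewrite [in RHS](reindex_inj sg_inj) big_distrr /=; apply: eq_bigr => k _.
rewrite /= rot_sig //.
set W := rot k S.
have cW : cycle (@er Q) W by rewrite rot_cycle.
have eqb : (pcat P R == Some (mkpath v W)) = (pcat R P == Some (mkpath v (rot l W))).
  apply/eqP/eqP => E.
    have [E' _] := pcat_rot E (clk k).
    have [[_ _ _ e] [vy _ _]] := pcat_some E'.
    have [[_ _ _ e2] _] := pcat_some E.
    rewrite E'; move: e2 => /(congr1 snd) /= ->.
    rewrite /l rot_size_cat; congr Some; symmetry; apply: (nf_ne v vy).
    by rewrite /= -size_eq0 size_cat addnC (eqP hs).
  have cl : closedP (mkpath v (rot l W)).
    by have := vc v (rot l W); rewrite rot_cycle cW => /andP[].
  have [E' _] := pcat_rot E cl.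
  have [[_ _ _ e] [vy _ _]] := pcat_some E'.
  have [[_ _ _ e2] _] := pcat_some E.
  move: e2 => /(congr1 snd) /= e2.
  have eW : W = P.2 ++ R.2 by rewrite -(rotK l W) e2 /l rotr_size_cat.
  rewrite E' eW; congr Some; symmetry; apply: (nf_ne v vy).
  by rewrite /= -size_eq0 size_cat (eqP hs).
rewrite -eqb; case: eqP => E; last by rewrite !mulr0.
have [[_ _ _ e] _] := pcat_some E.
move: e => /(congr1 snd) /= eW.
rewrite !mulr1.
set a := (count (@starred Q) (take k S) * count (@starred Q) (drop k S))%N.
set b := (count (@starred Q) (take (sig (size S) l k) S) * count (@starred Q) (drop (sig (size S) l k) S))%N.
set ep := (nstar P * nstar R)%N.
have ho : odd a = odd ep (+) odd b.
  rewrite /a (sign_rot (@starred Q) (hk k) hl) -/W eW /l take_size_cat // drop_size_cat //.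
have <- : forall m, (-1) ^+ (odd m) = (-1) ^+ m :> C by move=> m; exact: signr_odd.
by rewrite ho signr_addb !signr_odd.
Qed.


Lemma Dw_relgen (Q : quiver) (C : numClosedFieldType) (z : letter Q) (P R : rawpath Q) u :
  Dw z (relgen C P R) u = 0.
Proof.
rewrite DwE; case: ifP => // _; case: ifP => // /andP[cS _].
rewrite /relgen.
under eq_bigr => k _ do rewrite !mulE_pt !optptE mulrBr mulrCA.
rewrite sumrB -big_distrr /=.
rewrite (rotsum C P R (hdP u) (size_rcons u.2 z) cS).
by rewrite subrr.
Qed.

Lemma Dw_V0 (Q : quiver) (C : numClosedFieldType) (z : letter Q) (x : elt Q C) u :
  inV0 x -> Dw z x u = 0.
Proof.
move=> [s hs]; rewrite (Dw_sum _ _ hs) big1_seq // => t _.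
by rewrite Dw_scale Dw_relgen mulr0.
Qed.

Lemma pcat_assoc (Q : quiver) (X Y Z : rawpath Q) :
  obind (fun w => pcat w Z) (pcat X Y) = obind (pcat X) (pcat Y Z).
Proof.
case E1: (pcat X Y) => [w1|]; case E2: (pcat Y Z) => [w2|] //=.
- have [[vX vY e1 ->] _] := pcat_some E1.
  have [[_ vZ e2 ->] _] := pcat_some E2.
  have [j1 j2 j3] := join vX vY e1.
  have [k1 k2 k3] := join vY vZ e2.
  by rewrite /pcat j1 k1 vZ vX j2 j3 k2 e2 e1 !eqxx /= catA.
- have [[vX vY e1 ->] _] := pcat_some E1.
  have [j1 j2 j3] := join vX vY e1.
  move: E2; rewrite /pcat j1 vY j3 /=.
  by case: (valid Z) => //=; case: (tlP Y == hdP Z).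
- have [[vY vZ e2 ->] _] := pcat_some E2.
  have [k1 k2 k3] := join vY vZ e2.
  move: E1; rewrite /pcat k1 vY k2 /=.
  by case: (valid X) => //=; case: (tlP X == hdP Y).
Qed.

Lemma sum_seq_nz (C : numClosedFieldType) (I : eqType) (s : seq I) (F : I -> C) :
  \sum_(t <- s) F t != 0 -> exists2 t, t \in s & F t != 0.
Proof.
move=> nz; case: (boolP (has (fun t => F t != 0) s)) => [/hasP[t ts ft]|/hasPn h].
  by exists t.
by move: nz; rewrite big1_seq ?eqxx // => t /andP[_ /h /negPn/eqP].
Qed.

Lemma sum_ord_nz (C : numClosedFieldType) (T : finType) (F : T -> C) :
  \sum_(i : T) F i != 0 -> exists i, F i != 0.
Proof.
move=> nz; case: (pickP (fun i => F i != 0)) => [i fi|h]; first by exists i.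
by move: nz; rewrite big1 ?eqxx // => i _; move: (h i) => /negbFE/eqP.
Qed.

Definition Gof (Q : quiver) (C : numClosedFieldType)
  (s : seq (C * rawpath Q * arrow Q * rawpath Q * arrow Q)) : elt Q C :=
  fun w => \sum_(t <- s)
       t.1.1.1.1 * commE (mulE (pt C t.1.1.1.2) (pt C (starP t.1.1.2)))
                         (mulE (pt C t.1.2) (pt C (starP t.2))) w.

Lemma G_supp (Q : quiver) (C : numClosedFieldType) p
  (s : seq (C * rawpath Q * arrow Q * rawpath Q * arrow Q)) :
  (forall c P a R b, (c, P, a, R, b) \in s ->
       [/\ valid P, nstar P = 0%N, valid R, nstar R = 0%N &
           c != 0 -> forall w, term_path P a R b = Some w -> closedP w ->
             size w.2 = p.+2]) ->
  forall x, closedP x -> Gof s x != 0 -> size x.2 = p.+2.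
Proof.
move=> hs x cx /sum_seq_nz[[[[[c P] a] R] b] ts] /=.
have [_ _ _ _ H] := hs c P a R b ts.
rewrite mulf_eq0 negb_or => /andP[nc ncm].
move: ncm; rewrite /commE.
rewrite (@mulE_ext _ _ _ (optpt C (pcat P (starP a))) _ (optpt C (pcat R (starP b)))); try by move=> v; rewrite mulE_pt.
rewrite (@mulE_ext _ _ (mulE _ _) (optpt C (pcat R (starP b))) _ (optpt C (pcat P (starP a)))); try by move=> v; rewrite mulE_pt.
rewrite !mulE_opt.
have key : forall y, (if pcat P (starP a) is Some y1 then
      if pcat R (starP b) is Some y2 then pcat y1 y2 else None else None) = Some y ->
      closedP y -> size y.2 = p.+2.
  move=> y; case E1: (pcat P (starP a)) => [y1|//]; case E2: (pcat R (starP b)) => [y2|//].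
  move=> ey cy; apply: (H nc y _ cy).
  by rewrite /term_path E1 /= pcat_assoc E2 /=.
case E1: (pcat P (starP a)) key => [y1|]; last first.
  by move=> _; case: (pcat R (starP b)) => [?|]; rewrite /= subrr eqxx.
case E2: (pcat R (starP b)) => [y2|]; last by move=> _; rewrite /= subrr eqxx.
move=> key; rewrite !optptE.
case: (eqVneq (pcat y1 y2) (Some x)) => [e1 _|_]; first exact: key _ e1 cx.
case: (eqVneq (pcat y2 y1) (Some x)) => [e2 _|_]; last by rewrite subrr eqxx.
have [E' cl] := pcat_rot e2 cx.
have [[_ _ _ ex] _] := pcat_some e2.
rewrite ex /= size_cat addnC -size_cat.
exact: (key _ E' cl).
Qed.

Lemma Dw_supp (Q : quiver) (C : numClosedFieldType) (z : letter Q) (g : elt Q C) u :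
  Dw z g u != 0 -> exists x, [/\ closedP x, g x != 0 & size x.2 = (size u.2).+1].
Proof.
rewrite DwE; case: ifP => _; last by rewrite eqxx.
case: ifP => /= [/andP[cS _]|_]; last by rewrite eqxx.
move=> /sum_ord_nz[k]; rewrite mulf_eq0 negb_or => /andP[_ nz].
exists (mkpath (hdP u) (rot k (rcons u.2 z))); split => //.
  by have := vc (hdP u) (rot k (rcons u.2 z)); rewrite rot_cycle cS => /andP[].
by rewrite /= size_rot size_rcons.
Qed.

Lemma DPi_supp (Q : quiver) (C : numClosedFieldType) p (Pi : elt Q C) :
  homogeneous p Pi -> forall z u, Dw z Pi u != 0 -> size u.2 = p.+1.
Proof.
move=> [s [hs hV]] z u.
have -> : Dw z Pi u = Dw z (Gof s) u.
  rewrite -[RHS]addr0 -(Dw_V0 z u hV) -Dw_add.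
  by apply: Dw_ext => w; rewrite /Gof addrC subrK.
move=> /Dw_supp[x [cx nx sx]].
by have := G_supp hs cx nx; rewrite sx => -[].
Qed.

Lemma mulE_supp (Q : quiver) (C : numClosedFieldType) (f g : elt Q C) n1 n2 u :
  (forall v, f v != 0 -> size v.2 = n1) -> (forall v, g v != 0 -> size v.2 = n2) ->
  mulE f g u != 0 -> size u.2 = (n1 + n2)%N.
Proof.
move=> hf hg; rewrite /mulE; case: ifP => _; last by rewrite eqxx.
move=> /sum_ord_nz[j]; rewrite mulf_eq0 negb_or => /andP[/hf e1 /hg e2].
by rewrite -(cat_take_drop j u.2) size_cat -e1 -e2.
Qed.

Lemma brV22 (Q : quiver) (C : numClosedFieldType) (g d : elt Q C) u :
  brV 2 2 g d u = \sum_(a : arrow Q)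
     (mulE (Dw (inr a) g) (Dw (inl a) d) u + mulE (Dw (inr a) d) (Dw (inl a) g) u).
Proof.
rewrite /brV; apply: eq_bigr => a _.
by rewrite -signr_odd /= expr1 mulN1r opprK.
Qed.

Lemma B_supp (Q : quiver) (C : numClosedFieldType) (g d : elt Q C) n1 n2 :
  (forall z u, Dw z g u != 0 -> size u.2 = n1) ->
  (forall z u, Dw z d u != 0 -> size u.2 = n2) ->
  forall u, brV 2 2 g d u != 0 -> size u.2 = (n1 + n2)%N.
Proof.
move=> hg hd u; rewrite brV22 => /sum_ord_nz[a].
case: (eqVneq (mulE (Dw (inr a) g) (Dw (inl a) d) u) 0) => [->|nz _].
  by rewrite add0r addnC; apply: mulE_supp; [exact: hd|exact: hg].
by apply: mulE_supp nz; [exact: hg|exact: hd].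
Qed.

Lemma brV_sym (Q : quiver) (C : numClosedFieldType) (g d : elt Q C) u :
  brV 2 2 g d u = brV 2 2 d g u.
Proof. by rewrite !brV22; apply: eq_bigr => a _; rewrite addrC. Qed.

Lemma brV_expand (Q : quiver) (C : numClosedFieldType) (f1 f2 : elt Q C) u :
  brV 2 2 (fun w => f1 w + f2 w) (fun w => f1 w + f2 w) u =
  brV 2 2 f1 f1 u + brV 2 2 f2 f2 u + (brV 2 2 f1 f2 u + brV 2 2 f2 f1 u).
Proof.
rewrite !brV22 -!big_split; apply: eq_bigr => a _ /=.
have eD : forall z, forall w, Dw z (fun w => f1 w + f2 w) w = Dw z f1 w + Dw z f2 w.
  by move=> z w; rewrite Dw_add.
rewrite (@mulE_ext _ _ (Dw (inr a) _) (fun w => Dw (inr a) f1 w + Dw (inr a) f2 w)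
   (Dw (inl a) _) (fun w => Dw (inl a) f1 w + Dw (inl a) f2 w)) //.
rewrite !mulEDl !mulEDr.
set x11 := mulE (Dw (inr a) f1) (Dw (inl a) f1) u.
set x12 := mulE (Dw (inr a) f1) (Dw (inl a) f2) u.
set x21 := mulE (Dw (inr a) f2) (Dw (inl a) f1) u.
set x22 := mulE (Dw (inr a) f2) (Dw (inl a) f2) u.
ring.
Qed.

Lemma inV0_ext (Q : quiver) (C : numClosedFieldType) (x y : elt Q C) :
  (forall w, x w = y w) -> inV0 x -> inV0 y.
Proof. by move=> e [s hs]; exists s => w; rewrite -e hs. Qed.

Lemma inV0_scale (Q : quiver) (C : numClosedFieldType) (x : elt Q C) c :
  inV0 x -> inV0 (fun w => c * x w).
Proof.
move=> [s hs]; exists [seq (c * t.1.1, t.1.2, t.2) | t <- s] => w.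
by rewrite hs big_map big_distrr; apply: eq_bigr => t _ /=; rewrite mulrA.
Qed.

Lemma relgen_size (Q : quiver) (C : numClosedFieldType) (P R w : rawpath Q) :
  size w.2 != (size P.2 + size R.2)%N -> relgen C P R w = 0.
Proof.
move=> hs; rewrite /relgen !mulE_pt !optptE.
case: eqP => [/pcat_some[[_ _ _ e] _]|_]; first by move: hs; rewrite e /= size_cat eqxx.
case: eqP => [/pcat_some[[_ _ _ e] _]|_]; first by move: hs; rewrite e /= size_cat addnC eqxx.
by rewrite mulr0 subrr.
Qed.

Lemma inV0_proj (Q : quiver) (C : numClosedFieldType) (x : elt Q C) n :
  inV0 x -> inV0 (fun w => if size w.2 == n then x w else 0).
Proof.
move=> [s hs]; exists [seq t <- s | (size t.1.2.2 + size t.2.2 == n)%N] => w.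
rewrite big_filter big_mkcond /= hs.
case: (eqVneq (size w.2) n) => [e|ne].
  apply: eq_bigr => t _; case: ifP => // /negbT ne.
  by rewrite relgen_size ?mulr0 // e eq_sym.
rewrite big1 // => t _; case: ifP => // /eqP e.
by rewrite relgen_size ?mulr0 // e.
Qed.

Theorem mainTheorem4 (Q : quiver) (C : numClosedFieldType)
    (Pi1 Pi2 : elt Q C) (p1 p2 : nat) :
  inCQbar 2 Pi1 -> inCQbar 2 Pi2 ->
  homogeneous p1 Pi1 -> homogeneous p2 Pi2 -> p1 <> p2 ->
  let Pi := fun w => Pi1 w + Pi2 w in
  inV0 (brV 2 2 Pi Pi) ->
  [/\ inV0 (brV 2 2 Pi1 Pi1), inV0 (brV 2 2 Pi2 Pi2),
      inV0 (brV 2 2 Pi1 Pi2) & inV0 (brV 2 2 Pi2 Pi1)].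
Proof.
move=> _ _ h1 h2 hp Pi hPi.
have D1 := DPi_supp h1; have D2 := DPi_supp h2.
have Z : forall (g d : elt Q C) n1 n2,
    (forall z u, Dw z g u != 0 -> size u.2 = n1) ->
    (forall z u, Dw z d u != 0 -> size u.2 = n2) ->
    forall u, size u.2 != (n1 + n2)%N -> brV 2 2 g d u = 0.
  move=> g d n1 n2 hg hd u ne; apply/eqP; apply: contraNT ne => nz.
  by rewrite (B_supp hg hd nz).
have Z11 := Z _ _ _ _ D1 D1; have Z22 := Z _ _ _ _ D2 D2.
have Z12 := Z _ _ _ _ D1 D2.
have E : forall u, brV 2 2 Pi Pi u =
   brV 2 2 Pi1 Pi1 u + brV 2 2 Pi2 Pi2 u + (brV 2 2 Pi1 Pi2 u + brV 2 2 Pi1 Pi2 u).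
  by move=> u; rewrite /Pi brV_expand [brV 2 2 Pi2 Pi1 u]brV_sym.
have G12 : inV0 (brV 2 2 Pi1 Pi2).
  apply: (inV0_ext _ (inV0_scale (2%:R)^-1 (inV0_proj (p1.+1 + p2.+1)%N hPi))) => w.
  case: (eqVneq (size w.2) (p1.+1 + p2.+1)%N) => e; last by rewrite Z12 ?e // mulr0.
  rewrite E Z11 ?Z22 ?e; try by apply/eqP; lia.
  have two0 : (2%:R : C) != 0 by rewrite pnatr_eq0.
  rewrite !add0r; field => //.
split.
- apply: (inV0_ext _ (inV0_proj (p1.+1 + p1.+1)%N hPi)) => w.
  case: (eqVneq (size w.2) (p1.+1 + p1.+1)%N) => e; last by rewrite Z11 ?e.
  rewrite E Z12 ?Z22 ?e ?addr0 //; by apply/eqP; lia.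
- apply: (inV0_ext _ (inV0_proj (p2.+1 + p2.+1)%N hPi)) => w.
  case: (eqVneq (size w.2) (p2.+1 + p2.+1)%N) => e; last by rewrite Z22 ?e.
  rewrite E Z12 ?Z11 ?e ?addr0 ?add0r //; by apply/eqP; lia.
- exact: G12.
- by apply: (inV0_ext _ G12) => w; rewrite brV_sym.
Qed.
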